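(* Let $\{(\mathbf{x}_i,\mathbf{v}_i)\}_{i=1}^N$ be a global smooth solution of the Cucker–Smale model with bonding force $$\dot{\mathbf{x}}_i=\mathbf{v}_i,\qquad \dot{\mathbf{v}}_i=\frac{\kappa_0}{N}\sum_{j=1}^N\psi(\|\mathbf{x}_j-\mathbf{x}_i\|)(\mathbf{v}_j-\mathbf{v}_i)+\frac{\kappa_1}{N}\sum_{j\ne i}\Big\langle\mathbf{v}_j-\mathbf{v}_i,\frac{\mathbf{x}_j-\mathbf{x}_i}{\|\mathbf{x}_j-\mathbf{x}_i\|}\Big\rangle\frac{\mathbf{x}_j-\mathbf{x}_i}{\|\mathbf{x}_j-\mathbf{x}_i\|}+\frac{\kappa_2}{N}\sum_{j\ne i}\big(\|\mathbf{x}_j-\mathbf{x}_i\|-d^\infty_{ij}\big)\frac{\mathbf{x}_j-\mathbf{x}_i}{\|\mathbf{x}_j-\mathbf{x}_i\|}.$$ Then for all $i,j\in[N]$, $$\sup_{t\ge0}\Big|\frac{d}{dt}\|\mathbf{v}_i(t)-\mathbf{v}_j(t)\|^2\Big|<\infty.$$ In particular, $t\mapsto\|\mathbf{v}_i(t)-\mathbf{v}_j(t)\|^2$ is uniformly continuous on $[0,\infty)$.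
   Context: $N\ge2$, $d\ge1$, Euclidean norm and inner product on $\mathbb{R}^d$; $\kappa_0,\kappa_1,\kappa_2\ge0$; $[d^\infty_{ij}]$ real symmetric with zero diagonal. $E:=\frac12\sum_i\|\mathbf{v}_i\|^2+\frac{\kappa_2}{4N}\sum_{i,j}(\|\mathbf{x}_j-\mathbf{x}_i\|-d^\infty_{ij})^2$, $U:=\max_{i\ne j}d^\infty_{ij}+\sqrt{2NE(0)/\kappa_2}$. The weight $\psi:[0,\infty)\to[0,\infty)$ is locally Lipschitz with $0\le\psi(r)\le\psi_M$ for all $r\ge0$ and $\min_{r\in[0,U]}\psi(r)>0$. A global smooth solution is a $C^1$ solution on $[0,\infty)$ with $\mathbf{x}_i(t)\ne\mathbf{x}_j(t)$ for $i\ne j$. *)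

(* Defs.v *)
From HB Require Import structures.
From mathcomp Require Import all_boot all_order all_algebra.
From mathcomp Require Import all_classical all_reals all_analysis.
Set Implicit Arguments. Unset Strict Implicit. Unset Printing Implicit Defensive.
Import Order.TTheory GRing.Theory Num.Theory.
Import numFieldNormedType.Exports.
Local Open Scope classical_set_scope.
Local Open Scope ring_scope.

Section CSDefs.
Variables (R : realType) (N d : nat).

Definition vdot (u w : 'I_d -> R) : R := \sum_(k < d) u k * w k.
Definition enorm (u : 'I_d -> R) : R := Num.sqrt (vdot u u).
Definition vdiff (u w : 'I_d -> R) : 'I_d -> R := fun k => u k - w k.

(* derivative of f at t relative to the domain [0, +oo)
   (one-sided at t = 0, two-sided for t > 0) *)
Definition has_deriv_nonneg (f : R -> R) (t l : R) : Prop :=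
  (fun h => h^-1 * (f (t + h) - f t)) @ within (fun h => 0 <= t + h) (0 : R)^'
    --> l.

Definition cs_accel (kappa0 kappa1 kappa2 : R) (psi : R -> R)
  (dinf : 'I_N -> 'I_N -> R)
  (x v : 'I_N -> 'I_d -> R) (i : 'I_N) (k : 'I_d) : R :=
  let e j := fun l => vdiff (x j) (x i) l / enorm (vdiff (x j) (x i)) in
  kappa0 / N%:R * \sum_(j < N) psi (enorm (vdiff (x j) (x i))) * (v j k - v i k)
  + kappa1 / N%:R * \sum_(j < N | j != i)
        vdot (vdiff (v j) (v i)) (e j) * e j k
  + kappa2 / N%:R * \sum_(j < N | j != i)
        (enorm (vdiff (x j) (x i)) - dinf i j) * e j k.

Definition cs_global_solution (kappa0 kappa1 kappa2 : R) (psi : R -> R)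
  (dinf : 'I_N -> 'I_N -> R)
  (x v : 'I_N -> R -> 'I_d -> R) : Prop :=
  (forall t, 0 <= t -> forall i k,
      has_deriv_nonneg (fun s => x i s k) t (v i t k) /\
      has_deriv_nonneg (fun s => v i s k) t
         (cs_accel kappa0 kappa1 kappa2 psi dinf (fun j => x j t) (fun j => v j t) i k))
  /\ (forall t, 0 <= t -> forall i j : 'I_N, i != j -> x i t != x j t).

Definition cs_energy (kappa2 : R) (dinf : 'I_N -> 'I_N -> R)
  (x v : 'I_N -> 'I_d -> R) : R :=
  2^-1 * \sum_(i < N) enorm (v i) ^+ 2
  + kappa2 / (4 * N%:R) * \sum_(i < N) \sum_(j < N)
        (enorm (vdiff (x j) (x i)) - dinf i j) ^+ 2.

(* "r <= U" where U = max_{i<>j} dinf i j + sqrt(2 N E0 / kappa2);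
   written as: r is below dinf i j + sqrt(...) for some pair i <> j *)
Definition le_U (kappa2 E0 : R) (dinf : 'I_N -> 'I_N -> R) (r : R) : Prop :=
  exists i j : 'I_N, i != j /\
    r <= dinf i j + Num.sqrt (2 * N%:R * E0 / kappa2).

End CSDefs.

(* Main.v *)
Require Import Defs.
From HB Require Import structures.
From mathcomp Require Import all_boot all_order all_algebra.
From mathcomp Require Import all_classical all_reals all_analysis.
From mathcomp Require Import lra ring.
Import Order.TTheory GRing.Theory Num.Theory.
Import numFieldNormedType.Exports.
Local Open Scope classical_set_scope.
Local Open Scope ring_scope.

Set Implicit Arguments. Unset Strict Implicit.



Section DerivLemmas.
Variable R : realType.
Implicit Types (f g : R -> R) (t l a b : R).

Local Notation FF t := (within (fun h : R => 0 <= t + h) (0 : R)^').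
Local Notation D := has_deriv_nonneg.

Lemma near_FF t (P : R -> Prop) :
  (forall h, h != 0 -> 0 <= t + h -> P h) -> \forall h \near FF t, P h.
Proof.
move=> HP; rewrite near_withinE near_withinE; apply: nearW => h hn0 ht.
exact: HP.
Qed.

Lemma FF_to0 t : (fun h : R => h) @ FF t --> (0 : R).
Proof.
apply: cvg_trans (cvg_within _) _; apply: cvg_trans (cvg_within _) _.
exact: cvg_id.
Qed.

Lemma D_cont f t l : D f t l -> (fun h => f (t + h)) @ FF t --> f t.
Proof.
move=> Hf.
have H : (fun h => f t + h * (h^-1 * (f (t + h) - f t))) @ FF t --> f t + 0 * l.
  apply: cvgD; first exact: cvg_cst.
  apply: cvgM; [exact: FF_to0 | exact: Hf].
rewrite mul0r addr0 in H; apply: cvg_trans _ H.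
apply: near_eq_cvg; apply: near_FF => h hn0 _.
by rewrite mulrA mulfV // mul1r addrC subrK.
Qed.

Lemma D_ext f g t l : D f t l -> (forall s, f s = g s) -> D g t l.
Proof. by move=> H fg; have <- : f = g by apply/funext. Qed.

Lemma D_eq f t l l' : l = l' -> D f t l -> D f t l'.
Proof. by move=> ->. Qed.

Lemma D_cst c t : D (fun _ => c) t 0.
Proof.
rewrite /has_deriv_nonneg.
have H : (fun _ : R => 0 : R) @ FF t --> (0:R) by exact: cvg_cst.
 apply: cvg_trans _ H; apply: near_eq_cvg; apply: nearW => h.
by rewrite subrr mulr0.
Qed.

Lemma D_add f g t a b : D f t a -> D g t b -> D (fun s => f s + g s) t (a + b).
Proof.
rewrite /has_deriv_nonneg.
move=> Hf Hg.
have H : (fun h => h^-1 * (f (t + h) - f t) + h^-1 * (g (t + h) - g t)) @ FF t --> a + b.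
  exact: cvgD.
apply: cvg_trans _ H.
apply: near_eq_cvg; apply: nearW => h /=.
by rewrite -mulrDr; congr (_ * _); rewrite opprD addrACA.
Qed.

Lemma D_scale c f t a : D f t a -> D (fun s => c * f s) t (c * a).
Proof.
rewrite /has_deriv_nonneg.
move=> Hf.
have H : (fun h => c * (h^-1 * (f (t + h) - f t))) @ FF t --> c * a.
  apply: cvgM => //; exact: cvg_cst.
apply: cvg_trans _ H.
apply: near_eq_cvg; apply: nearW => h /=.
by rewrite -mulrBr mulrCA.
Qed.

Lemma D_mul f g t a b : D f t a -> D g t b ->
  D (fun s => f s * g s) t (f t * b + a * g t).
Proof.
rewrite /has_deriv_nonneg.
move=> Hf Hg.
have H : (fun h => f (t + h) * (h^-1 * (g (t + h) - g t)) + (h^-1 * (f (t + h) - f t)) * g t) @ FF t --> f t * b + a * g t.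
  apply: cvgD; apply: cvgM => //; [exact: D_cont Hf | exact: cvg_cst].
apply: cvg_trans _ H.
apply: near_eq_cvg; apply: nearW => h /=.
rewrite mulrCA -mulrA -mulrDr; congr (_ * _).
rewrite mulrBr mulrBl addrA subrK; by [].
Qed.

Lemma D_sum (I : Type) (r : seq I) (P : pred I) (F : I -> R -> R) (L : I -> R) t :
  (forall i, P i -> D (F i) t (L i)) ->
  D (fun s => \sum_(i <- r | P i) F i s) t (\sum_(i <- r | P i) L i).
Proof.
move=> HF; elim: r => [|x r IH].
  rewrite big_nil; refine (D_ext (D_cst 0 t) _) => s; by rewrite big_nil.
rewrite big_cons; case: ifP => Px.
  refine (D_ext (D_add (HF _ Px) IH) _) => s; by rewrite big_cons Px.
by refine (D_ext IH _) => s; rewrite big_cons Px.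
Qed.

Lemma D_sqrt f t a : (forall s, 0 <= f s) -> 0 < f t -> D f t a ->
  D (fun s => Num.sqrt (f s)) t (a / (Num.sqrt (f t) + Num.sqrt (f t))).
Proof.
rewrite /has_deriv_nonneg.
move=> f0 ft0 Hf.
have Hs : (fun h => Num.sqrt (f (t + h)) + Num.sqrt (f t)) @ FF t -->
            Num.sqrt (f t) + Num.sqrt (f t).
  apply: cvgD; last exact: cvg_cst.
  apply: (continuous_cvg _ (@sqrt_continuous R _)); exact: D_cont Hf.
have pos : 0 < Num.sqrt (f t) + Num.sqrt (f t) by rewrite addr_gt0 // sqrtr_gt0.
have H : (fun h => (h^-1 * (f (t + h) - f t)) * (Num.sqrt (f (t + h)) + Num.sqrt (f t))^-1) @ FF t --> a / (Num.sqrt (f t) + Num.sqrt (f t)).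
  apply: cvgM => //; exact: (cvgV (lt0r_neq0 pos) Hs).
apply: cvg_trans _ H.
apply: near_eq_cvg; apply: nearW => h /=.
have pos' : 0 < Num.sqrt (f (t + h)) + Num.sqrt (f t).
  by rewrite ltr_wpDl // ?sqrtr_ge0 // sqrtr_gt0.
rewrite -mulrA; congr (_ * _).
apply: (@mulIf _ (Num.sqrt (f (t + h)) + Num.sqrt (f t))); first exact: lt0r_neq0.
rewrite divfK; last exact: lt0r_neq0.
rewrite mulrBl !mulrDr -!expr2 !sqr_sqrtr //.
by rewrite [Num.sqrt (f t) * _]mulrC opprD addrA addrK.
Qed.


Lemma D_interior f t l : 0 < t -> D f t l ->
  (fun h => h^-1 *: (f (h + t) - f t)) @ (0:R)^' --> l.
Proof.
move=> t0 Hf; apply/cvgrPdist_lt => e e0.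
move/cvgrPdist_lt : Hf => /(_ e e0); rewrite !near_withinE => H.
have Ht : \forall h \near (0:R), 0 <= t + h.
  exists t => //= h; rewrite /ball /= sub0r normrN ltr_norml => /andP[h1 _].
  lra.
apply: filterS2 H Ht => h H1 H2 hn0.
by rewrite [h + t]addrC; exact: H1.
Qed.

Lemma D_derivable f t l : 0 < t -> D f t l -> derivable f t 1 /\ derive1 f t = l.
Proof.
move=> t0 Hf; have H := D_interior t0 Hf; split.
rewrite /derivable; apply/cvg_ex; exists l; apply: cvg_trans _ H.
  apply: near_eq_cvg; apply: nearW => h /=.
  by rewrite [h%:A]mulr1.
exact: cvg_lim.
Qed.

Lemma D_nonincr f : (forall t, 0 <= t -> exists l, D f t l /\ l <= 0) ->
  forall s t, 0 <= s -> s <= t -> f t <= f s.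
Proof.
move=> Hd s t s0 st.
apply: (@ler0_derive1_nincry R f 0) => //.
- move=> x; rewrite in_itv /= andbT => x0.
  have [l [Hl _]] := Hd x (ltW x0); exact: (D_derivable x0 Hl).1.
- move=> x; rewrite in_itv /= andbT => x0.
  have [l [Hl Hl0]] := Hd x (ltW x0); by rewrite (D_derivable x0 Hl).2.
apply/continuous_within_itvcyP; split.
  move=> x; rewrite in_itv /= andbT => x0.
  have [l [Hl _]] := Hd x (ltW x0).
  apply: differentiable_continuous; apply/derivable1_diffP.
  exact: (D_derivable x0 Hl).1.
have [l [Hl _]] := Hd 0 (lexx 0).
have Hc := D_cont Hl.
apply/cvgrPdist_lt => e e0.
move/cvgrPdist_lt : Hc => /(_ e e0); rewrite !near_withinE => H.
apply: filterS H => h H hpos.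
by move: (H (lt0r_neq0 hpos) (ltW (eq_ind_r (fun z => 0 < z) hpos (add0r h)))); rewrite add0r.
Qed.


Lemma D_sub f g t a b : D f t a -> D g t b -> D (fun s => f s - g s) t (a - b).
Proof.
move=> Hf Hg; have H := D_add Hf (D_scale (c := -1) Hg).
apply: D_eq (D_ext H _); first by rewrite mulN1r.
by move=> s; rewrite mulN1r.
Qed.

Lemma D_id t : D (fun s => s) t 1.
Proof.
rewrite /has_deriv_nonneg.
have H : (fun _ : R => 1 : R) @ FF t --> (1:R) by exact: cvg_cst.
apply: cvg_trans _ H; apply: near_eq_cvg; apply: near_FF => h hn0 _.
by rewrite addrC addKr mulVf.
Qed.

Lemma D_lip f M : (forall t, 0 <= t -> exists l, D f t l /\ `|l| <= M) ->
  forall s t, 0 <= s -> 0 <= t -> `|f s - f t| <= M * `|s - t|.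
Proof.
move=> Hd.
have key : forall s t, 0 <= s -> s <= t -> `|f s - f t| <= M * `|s - t|.
  move=> s t s0 st.
  have H1 : forall u v, 0 <= u -> u <= v -> f v - M * v <= f u - M * u.
    apply: (D_nonincr (f := fun u => f u - M * u)) => r r0; have [l [Hl Hlm]] := Hd r r0.
    exists (l - M * 1); split; first exact: D_sub Hl (D_scale (c := M) (D_id r)).
    rewrite mulr1 subr_le0; exact: le_trans (ler_norm l) Hlm.
  have H2 : forall u v, 0 <= u -> u <= v -> - f v - M * v <= - f u - M * u.
    apply: (D_nonincr (f := fun u => - f u - M * u)) => r r0; have [l [Hl Hlm]] := Hd r r0.
    exists (- 1 * l - M * 1); split.
      refine (D_ext (D_sub (D_scale (c := -1) Hl) (D_scale (c := M) (D_id r))) _).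
      by move=> s'; rewrite mulN1r.
    rewrite mulr1 mulN1r subr_le0; apply: le_trans Hlm.
    by rewrite -normrN ler_norm.
  have h1 := H1 s t s0 st; have h2 := H2 s t s0 st.
  rewrite [`|s - t|]distrC (@ger0_norm _ (t - s)); last by rewrite subr_ge0.
  rewrite ler_norml; apply/andP; split; lra.
move=> s t s0 t0; case: (leP s t) => st; first exact: key.
by rewrite distrC [`|s - t|]distrC; apply: key => //; exact: ltW.
Qed.

End DerivLemmas.



Section Vec.
Variables (R : realType) (d : nat).
Implicit Types (u w a b : 'I_d -> R).

Lemma vdotC u w : vdot u w = vdot w u.
Proof. by apply: eq_bigr => k _; rewrite mulrC. Qed.

Lemma vdot_vdiff_r u a b : vdot u (vdiff a b) = vdot u a - vdot u b.
Proof. by rewrite /vdot -sumrB; apply: eq_bigr => k _; rewrite mulrBr. Qed.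

Lemma vdot_vdiff_l a b w : vdot (vdiff a b) w = vdot a w - vdot b w.
Proof. by rewrite /vdot -sumrB; apply: eq_bigr => k _; rewrite mulrBl. Qed.

Lemma vdot_ge0 u : 0 <= vdot u u.
Proof. by apply: sumr_ge0 => k _; rewrite -expr2 sqr_ge0. Qed.

Lemma enorm_sq u : enorm u ^+ 2 = vdot u u.
Proof. exact: sqr_sqrtr (vdot_ge0 u). Qed.

Lemma enorm_ge0 u : 0 <= enorm u.
Proof. exact: sqrtr_ge0. Qed.

Lemma enorm_vdiffC a b : enorm (vdiff a b) = enorm (vdiff b a).
Proof.
rewrite /enorm /vdot; congr Num.sqrt; apply: eq_bigr => k _.
by rewrite /vdiff -opprB mulrNN.
Qed.

Lemma comp_le_vdot u k : u k ^+ 2 <= vdot u u.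
Proof.
rewrite /vdot (bigD1 k) //= -expr2 lerDl.
by apply: sumr_ge0 => l _; rewrite -expr2 sqr_ge0.
Qed.

Lemma comp_le_enorm u k : `|u k| <= enorm u.
Proof. by rewrite -sqrtr_sqr; apply: ler_wsqrtr; exact: comp_le_vdot. Qed.

Lemma sum_abs_le n (P : pred 'I_n) (F : 'I_n -> R) B :
  0 <= B -> (forall i, P i -> `|F i| <= B) ->
  `|\sum_(i < n | P i) F i| <= n%:R * B.
Proof.
move=> B0 HF; apply: le_trans (ler_norm_sum _ _ _) _.
rewrite big_mkcond /=.
apply: (@le_trans _ _ (\sum_(i < n) B)).
  by apply: ler_sum => i _; case: ifP => Pi; [exact: HF | done].
by rewrite sumr_const card_ord mulr_natl.
Qed.

Lemma vdot_abs_le u w Bu Bw : 0 <= Bu -> 0 <= Bw ->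
  (forall k, `|u k| <= Bu) -> (forall k, `|w k| <= Bw) ->
  `|vdot u w| <= d%:R * (Bu * Bw).
Proof.
move=> Bu0 Bw0 Hu Hw; apply: sum_abs_le; first exact: mulr_ge0.
by move=> k _; rewrite normrM; apply: ler_pM.
Qed.

Lemma abs_le_1sq (y : R) : `|y| <= 1 + y ^+ 2.
Proof.
rewrite -real_normK ?num_real //.
have := sqr_ge0 (`|y| - 2^-1); rewrite sqrrB.
have := normr_ge0 y; nra.
Qed.

End Vec.



Section Alg.
Variables (R : realType) (N d : nat) (k0 k1 k2 : R) (psi : R -> R)
  (dinf : 'I_N -> 'I_N -> R) (X V : 'I_N -> 'I_d -> R).

Definition rr i j := enorm (vdiff (X j) (X i)).
Definition ee i j : 'I_d -> R := fun l => vdiff (X j) (X i) l / rr i j.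
Definition pp i j := rr i j - dinf i j.
Definition cc i j := vdot (vdiff (V j) (V i)) (ee i j).
Definition AA i : 'I_d -> R := fun k => cs_accel k0 k1 k2 psi dinf X V i k.

Definition G1 i j :=
  k0 / N%:R * (psi (rr i j) * vdot (V i) (vdiff (V j) (V i)))
  + k1 / N%:R * (cc i j * vdot (V i) (ee i j))
  + k2 / N%:R * (pp i j * vdot (V i) (ee i j)).

Lemma sum_pull (P : pred 'I_N) (u : 'I_d -> R) c (F : 'I_N -> 'I_d -> R) :
  \sum_(k < d) u k * (c * \sum_(j < N | P j) F j k)
  = c * \sum_(j < N | P j) \sum_(k < d) u k * F j k.
Proof.
rewrite exchange_big /= mulr_sumr; apply: eq_bigr => k _.
by rewrite mulrCA mulr_sumr.
Qed.

Lemma rm_neq i (F : 'I_N -> R) : F i = 0 ->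
  \sum_(j < N | j != i) F j = \sum_(j < N) F j.
Proof. by move=> Fi; apply: big_rmcond => j; rewrite negbK => /eqP ->. Qed.

Lemma ee_ii i k : ee i i k = 0.
Proof. by rewrite /ee /vdiff subrr mul0r. Qed.

Lemma vdotVA i : vdot (V i) (AA i) = \sum_(j < N) G1 i j.
Proof.
rewrite /vdot /AA /cs_accel /=.
under eq_bigr do rewrite !mulrDr.
rewrite !big_split /= !sum_pull.
rewrite !rm_neq; first last.
- by apply: big1 => k _; rewrite /vdiff subrr mul0r !mulr0.
- by apply: big1 => k _; rewrite /vdiff subrr mul0r !mulr0.
rewrite /G1 -!mulr_sumr.
congr (_ + _ + _); congr (_ * _); apply: eq_bigr => j _; rewrite /vdot mulr_sumr;
  apply: eq_bigr => k _; by rewrite mulrCA.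
Qed.


Hypotheses (Hk0 : 0 <= k0) (Hk1 : 0 <= k1) (Hk2 : 0 <= k2) (HN : (0 < N)%N)
  (Hsym : forall i j, dinf i j = dinf j i)
  (Hpsi : forall r, 0 <= r -> 0 <= psi r).

Lemma sym_le0 (G : 'I_N -> 'I_N -> R) : (forall i j, G i j + G j i <= 0) ->
  \sum_(i < N) \sum_(j < N) G i j <= 0.
Proof.
move=> HG.
have H2 : 0 <= \sum_(i < N) \sum_(j < N) - (G i j + G j i).
  by apply: sumr_ge0 => i _; apply: sumr_ge0 => j _; rewrite oppr_ge0.
have E : \sum_(i < N) \sum_(j < N) G j i = \sum_(i < N) \sum_(j < N) G i j.
  exact: exchange_big.
move: H2; under eq_bigr do rewrite sumrN big_split /=.
rewrite sumrN big_split /= E; lra.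
Qed.

Lemma rrC i j : rr j i = rr i j.
Proof. exact: enorm_vdiffC. Qed.

Lemma eeC i j : ee j i = (fun k => - ee i j k).
Proof. by apply/funext => k; rewrite /ee rrC /vdiff -opprB mulNr. Qed.

Lemma vdotN (u w : 'I_d -> R) : vdot u (fun k => - w k) = - vdot u w.
Proof. by rewrite /vdot -sumrN; apply: eq_bigr => k _; rewrite mulrN. Qed.

Lemma ppC i j : pp j i = pp i j.
Proof. by rewrite /pp rrC Hsym. Qed.

Definition GG i j := G1 i j + k2 / (4 * N%:R) * (pp i j * cc i j + cc i j * pp i j).

Lemma GG_pair i j : GG i j + GG j i <= 0.
Proof.
rewrite /GG /G1 /cc (eeC i j) !vdotN (ppC i j) (rrC i j) !vdot_vdiff_l !vdot_vdiff_r.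
have Q0 := vdot_ge0 (vdiff (V j) (V i)).
rewrite vdot_vdiff_l !vdot_vdiff_r in Q0.
rewrite (vdotC (V j) (V i)) in Q0 *.
have ps0 : 0 <= psi (rr i j) by apply: Hpsi; exact: enorm_ge0.
have Np : 0 < N%:R :> R by rewrite ltr0n.
have c2E : k2 / (4 * N%:R) = (k2 / N%:R) / 4.
  by rewrite invfM mulrA mulrAC.
rewrite c2E.
have K0p : 0 <= k0 / N%:R by apply: divr_ge0 => //; exact: ltW.
have K1p : 0 <= k1 / N%:R by apply: divr_ge0 => //; exact: ltW.
set K0 := k0 / N%:R in K0p *; set K1 := k1 / N%:R in K1p *; set K2 := k2 / N%:R.
set a := vdot (V i) (ee i j); set b := vdot (V j) (ee i j).
set g := vdot (V i) (V i) in Q0 *; set dd := vdot (V j) (V j) in Q0 *; set m := vdot (V i) (V j) in Q0 *.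
set ps := psi (rr i j) in ps0 *; set p := pp i j.
have h1 := mulr_ge0 (mulr_ge0 K0p ps0) Q0.
have h2 := mulr_ge0 K1p (sqr_ge0 (b - a)).
nra.
Qed.

Lemma energy_ineq :
  \sum_(i < N) 2^-1 * (vdot (V i) (AA i) + vdot (AA i) (V i))
  + k2 / (4 * N%:R) * \sum_(i < N) \sum_(j < N) (pp i j * cc i j + cc i j * pp i j)
  <= 0.
Proof.
have -> : \sum_(i < N) 2^-1 * (vdot (V i) (AA i) + vdot (AA i) (V i))
          = \sum_(i < N) \sum_(j < N) G1 i j.
  apply: eq_bigr => i _; rewrite (vdotC (AA i)) vdotVA; lra.
rewrite mulr_sumr -big_split /=.
have -> : \sum_(i < N) (\sum_(j < N) G1 i j + k2 / (4 * N%:R) *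
      \sum_(j < N) (pp i j * cc i j + cc i j * pp i j))
   = \sum_(i < N) \sum_(j < N) GG i j.
  by apply: eq_bigr => i _; rewrite mulr_sumr -big_split.
apply: sym_le0; exact: GG_pair.
Qed.

End Alg.



Section VecD.
Variables (R : realType) (d : nat).

Lemma D_vdot (u w : R -> 'I_d -> R) (du dw : 'I_d -> R) t :
  (forall k, has_deriv_nonneg (fun s => u s k) t (du k)) ->
  (forall k, has_deriv_nonneg (fun s => w s k) t (dw k)) ->
  has_deriv_nonneg (fun s => vdot (u s) (w s)) t (vdot (u t) dw + vdot du (w t)).
Proof.
move=> Hu Hw.
have H := D_sum (r := index_enum 'I_d) (P := xpredT) (fun k _ => D_mul (Hu k) (Hw k)).
apply: D_eq H; rewrite /vdot -big_split /=; apply: eq_bigr => k _.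
by rewrite mulrC.
Qed.

Lemma vdot_pos_neq (a b : 'I_d -> R) : a != b -> 0 < vdot (vdiff a b) (vdiff a b).
Proof.
move=> Hab.
have [k hk] : exists k, a k != b k.
  apply: contrapT => H; move/eqP: Hab; apply; apply/funext => k.
  apply/eqP/negPn/negP => hk; apply: H; exists k; exact: hk.
apply: lt_le_trans (comp_le_vdot _ k).
rewrite lt_neqAle sqr_ge0 andbT eq_sym sqrf_eq0 /vdiff subr_eq0; exact: hk.
Qed.

Lemma vdot_divr (u w : 'I_d -> R) c : vdot u (fun k => w k / c) = vdot u w / c.
Proof. by rewrite /vdot mulr_suml; apply: eq_bigr => k _; rewrite mulrA. Qed.

Lemma enorm_vdiff0 (a : 'I_d -> R) : enorm (vdiff a a) = 0.
Proof.
rewrite /enorm /vdot big1 ?sqrtr0 // => k _; by rewrite /vdiff subrr mul0r.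
Qed.

End VecD.



Section Model.
Variables (R : realType) (N d : nat) (k0 k1 k2 psiM : R) (psi : R -> R)
  (dinf : 'I_N -> 'I_N -> R) (x v : 'I_N -> R -> 'I_d -> R).
Hypotheses (HN : (2 <= N)%N) (Hk0 : 0 <= k0) (Hk1 : 0 <= k1) (Hk2 : 0 <= k2)
  (Hsym : forall i j, dinf i j = dinf j i)
  (Hpsi : forall r, 0 <= r -> 0 <= psi r <= psiM)
  (Hsol : cs_global_solution k0 k1 k2 psi dinf x v).

Local Notation Xt t := (fun j => x j t).
Local Notation Vt t := (fun j => v j t).
Definition acc t i := AA k0 k1 k2 psi dinf (Xt t) (Vt t) i.

Lemma HN0 : (0 < N)%N. Proof. by apply: leq_trans HN. Qed.
Lemma Npos : 0 < N%:R :> R. Proof. by rewrite ltr0n HN0. Qed.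

Lemma Dx t (t0 : 0 <= t) i k : has_deriv_nonneg (fun s => x i s k) t (v i t k).
Proof. exact: (proj1 Hsol t t0 i k).1. Qed.
Arguments Dx {t} t0 i k.

Lemma Dv t (t0 : 0 <= t) i k : has_deriv_nonneg (fun s => v i s k) t (acc t i k).
Proof. exact: (proj1 Hsol t t0 i k).2. Qed.
Arguments Dv {t} t0 i k.

Lemma Dr t (t0 : 0 <= t) i j :
  has_deriv_nonneg (fun s => enorm (vdiff (x j s) (x i s))) t (cc (Xt t) (Vt t) i j).
Proof.
case: (eqVneq i j) => [<-|hij].
  apply: D_eq (D_ext (D_cst 0 t) _); last by move=> s; rewrite enorm_vdiff0.
  by rewrite /cc /vdot big1 // => k _; rewrite ee_ii mulr0.
have Dd : forall k, has_deriv_nonneg (fun s => vdiff (x j s) (x i s) k) t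
                      (vdiff (v j t) (v i t) k).
  by move=> k; exact (D_sub (Dx t0 j k) (Dx t0 i k)).
have Hq := D_vdot Dd Dd.
have hji : j != i by rewrite eq_sym.
have qpos := vdot_pos_neq ((proj2 Hsol) t t0 j i hji).
have H := D_sqrt (fun s => vdot_ge0 (vdiff (x j s) (x i s))) qpos Hq.
apply: D_eq H.
rewrite /cc /ee /rr vdot_divr (vdotC (vdiff (x j t) (x i t))).
have r0 : enorm (vdiff (x j t) (x i t)) != 0 by rewrite lt0r_neq0 // sqrtr_gt0.
rewrite /enorm in r0 *.
set S := vdot _ _; set r := Num.sqrt _.
have rp : 0 < r by rewrite /r sqrtr_gt0.
field; apply/andP; split => //; apply: lt0r_neq0; exact: addr_gt0.
Qed.
Arguments Dr {t} t0 i j.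

Definition Ef s := cs_energy k2 dinf (Xt s) (Vt s).

Lemma D_E t (t0 : 0 <= t) : has_deriv_nonneg Ef t
  (2^-1 * \sum_(i < N) (vdot (v i t) (acc t i) + vdot (acc t i) (v i t))
   + k2 / (4 * N%:R) * \sum_(i < N) \sum_(j < N)
       (pp dinf (Xt t) i j * cc (Xt t) (Vt t) i j
        + cc (Xt t) (Vt t) i j * pp dinf (Xt t) i j)).
Proof.
have Hv i : has_deriv_nonneg (fun s => vdot (v i s) (v i s)) t
    (vdot (v i t) (acc t i) + vdot (acc t i) (v i t)).
  exact: D_vdot (Dv t0 i) (Dv t0 i).
have Hp i j : has_deriv_nonneg (fun s => enorm (vdiff (x j s) (x i s)) - dinf i j) t
    (cc (Xt t) (Vt t) i j).
  exact: D_eq (subr0 _) (D_sub (Dr t0 i j) (D_cst (dinf i j) t)).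
have H := D_add
  (D_scale (c := 2^-1) (D_sum (r := index_enum 'I_N) (P := xpredT) (fun i _ => Hv i)))
  (D_scale (c := k2 / (4 * N%:R)) (D_sum (r := index_enum 'I_N) (P := xpredT)
     (fun i _ => D_sum (r := index_enum 'I_N) (P := xpredT)
        (fun j _ => D_mul (Hp i j) (Hp i j))))).
refine (D_ext H _) => s.
rewrite /Ef /cs_energy; congr (_ * _ + _ * _).
by apply: eq_bigr => i _; rewrite enorm_sq.
Qed.


Lemma E_nonincr s t : 0 <= s -> s <= t -> Ef t <= Ef s.
Proof.
apply: D_nonincr => r r0; eexists; split; first exact: D_E r0.
rewrite mulr_sumr.
apply: energy_ineq => //.
- exact: HN0.
- by move=> q q0; have /andP[] := Hpsi q0.
Qed.

Definition E0 := Ef 0.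

Lemma sum_ge_term n (F : 'I_n -> R) i : (forall j, 0 <= F j) -> F i <= \sum_(j < n) F j.
Proof. by move=> F0; rewrite (bigD1 i) //= lerDl; apply: sumr_ge0. Qed.

Lemma c2_ge0 : 0 <= k2 / (4 * N%:R).
Proof. by apply: divr_ge0 => //; apply: mulr_ge0 => //; exact: ltW Npos. Qed.

Lemma S2_ge0 t : 0 <= \sum_(i < N) \sum_(j < N)
   (enorm (vdiff (x j t) (x i t)) - dinf i j) ^+ 2.
Proof. by apply: sumr_ge0 => i _; apply: sumr_ge0 => j _; exact: sqr_ge0. Qed.

Lemma S1_ge0 t : 0 <= \sum_(i < N) enorm (v i t) ^+ 2.
Proof. by apply: sumr_ge0 => i _; exact: sqr_ge0. Qed.

Lemma E_ge0 t : 0 <= Ef t.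
Proof.
rewrite /Ef /cs_energy; apply: addr_ge0; apply: mulr_ge0.
- by rewrite invr_ge0.
- exact: S1_ge0.
- exact: c2_ge0.
- exact: S2_ge0.
Qed.

Lemma E_le t : 0 <= t -> Ef t <= E0.
Proof. by move=> t0; apply: E_nonincr. Qed.

Lemma vv_le t i : 0 <= t -> vdot (v i t) (v i t) <= 2 * E0.
Proof.
move=> t0; have h := E_le t0; rewrite /Ef /cs_energy in h.
have h1 := mulr_ge0 c2_ge0 (S2_ge0 t).
have h2 : vdot (v i t) (v i t) <= \sum_(j < N) enorm (v j t) ^+ 2.
  rewrite -enorm_sq; apply: (sum_ge_term (F := fun j => enorm (v j t) ^+ 2)).
  by move=> j; exact: sqr_ge0.
lra.
Qed.

Lemma pp_le t i j : 0 <= t -> k2 * pp dinf (Xt t) i j ^+ 2 <= 4 * N%:R * E0.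
Proof.
move=> t0; have h := E_le t0; rewrite /Ef /cs_energy in h.
have i2 : 0 <= 2^-1 :> R by rewrite invr_ge0.
have h1 := mulr_ge0 i2 (S1_ge0 t).
have h2 : pp dinf (Xt t) i j ^+ 2 <= \sum_(i < N) \sum_(j < N)
   (enorm (vdiff (x j t) (x i t)) - dinf i j) ^+ 2.
  apply: le_trans (sum_ge_term (F := fun j => (enorm (vdiff (x j t) (x i t)) - dinf i j) ^+ 2) j _) _.
    by move=> l; exact: sqr_ge0.
  apply: (sum_ge_term (F := fun i => \sum_(j < N) (enorm (vdiff (x j t) (x i t)) - dinf i j) ^+ 2)).
  by move=> l; apply: sumr_ge0 => m _; exact: sqr_ge0.
have h3 : k2 / (4 * N%:R) * pp dinf (Xt t) i j ^+ 2 <= E0.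
  have h4 := ler_wpM2l c2_ge0 h2; lra.
have N4 : 0 < 4 * N%:R :> R by apply: mulr_gt0 => //; exact: Npos.
have -> : k2 * pp dinf (Xt t) i j ^+ 2 =
   4 * N%:R * (k2 / (4 * N%:R) * pp dinf (Xt t) i j ^+ 2).
  by rewrite mulrA [4 * N%:R * _]mulrC divfK // lt0r_neq0.
by apply: ler_wpM2l h3; exact: ltW.
Qed.

Definition Bv := 1 + 2 * E0.

Lemma Bv_ge0 : 0 <= Bv.
Proof. have := E_ge0 0; rewrite /Bv /E0; lra. Qed.

Lemma v_le t i k : 0 <= t -> `|v i t k| <= Bv.
Proof.
move=> t0; apply: le_trans (abs_le_1sq _) _; rewrite /Bv lerD2l.
exact: le_trans (comp_le_vdot _ k) (vv_le i t0).
Qed.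

Lemma dv_le t i j k : 0 <= t -> `|v j t k - v i t k| <= Bv + Bv.
Proof. by move=> t0; apply: le_trans (ler_normB _ _) _; apply: lerD; apply: v_le. Qed.

Lemma ee_le t i j k : `|ee (Xt t) i j k| <= 1.
Proof.
rewrite /ee normrM normfV.
have r0 : 0 <= rr (Xt t) i j := enorm_ge0 _.
rewrite (ger0_norm r0); case: (eqVneq (rr (Xt t) i j) 0) => [->|rn0].
  by rewrite invr0 mulr0 ler01.
rewrite ler_pdivrMr ?mul1r; first exact: comp_le_enorm.
by rewrite lt_neqAle eq_sym rn0 r0.
Qed.

Lemma psiM_ge0 : 0 <= psiM.
Proof. by have /andP[h1 h2] := Hpsi (lexx 0); exact: le_trans h1 h2. Qed.

Lemma psi_le r : 0 <= r -> `|psi r| <= psiM.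
Proof. by move=> r0; have /andP[h1 h2] := Hpsi r0; rewrite ger0_norm. Qed.

Lemma cc_le t i j : 0 <= t -> `|cc (Xt t) (Vt t) i j| <= d%:R * ((Bv + Bv) * 1).
Proof.
move=> t0; apply: vdot_abs_le => //.
- by have := Bv_ge0; lra.
- by move=> k; exact: dv_le.
- by move=> k; exact: ee_le.
Qed.

Lemma kp_le t i j : 0 <= t -> k2 * `|pp dinf (Xt t) i j| <= k2 + 4 * N%:R * E0.
Proof.
move=> t0; have h : `|pp dinf (Xt t) i j| <= 1 + pp dinf (Xt t) i j ^+ 2 := abs_le_1sq _.
have h2 : k2 * `|pp dinf (Xt t) i j| <= k2 * (1 + pp dinf (Xt t) i j ^+ 2).
  by rewrite ler_wpM2l.
apply: le_trans h2 _.
by rewrite mulrDr mulr1 lerD2l; exact: pp_le.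
Qed.

Definition Ba := k0 / N%:R * (N%:R * (psiM * (Bv + Bv)))
  + k1 / N%:R * (N%:R * (d%:R * ((Bv + Bv) * 1) * 1))
  + N%:R^-1 * (N%:R * ((k2 + 4 * N%:R * E0) * 1)).

Lemma acc_le t i k : 0 <= t -> `|acc t i k| <= Ba.
Proof.
move=> t0.
have Bv2 : 0 <= Bv + Bv by have := Bv_ge0; lra.
have Np := Npos.
have K0p : 0 <= k0 / N%:R by apply: divr_ge0 => //; exact: ltW.
have K1p : 0 <= k1 / N%:R by apply: divr_ge0 => //; exact: ltW.
have E0p : 0 <= E0 := E_ge0 0.
rewrite /acc /AA /cs_accel /=.
apply: le_trans (ler_normD _ _) _.
apply: le_trans (lerD (ler_normD _ _) (lexx _)) _.
apply: lerD; first apply: lerD.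
- rewrite normrM (ger0_norm K0p); apply: (ler_wpM2l K0p).
  apply: sum_abs_le; first exact: mulr_ge0 psiM_ge0 Bv2.
  move=> j _; rewrite normrM; apply: ler_pM => //.
    by apply: psi_le; exact: enorm_ge0.
  exact: dv_le.
- rewrite normrM (ger0_norm K1p); apply: (ler_wpM2l K1p).
  apply: sum_abs_le.
    by rewrite mulr1; apply: mulr_ge0 => //; rewrite mulr1.
  move=> j _; rewrite normrM; apply: ler_pM => //.
  + exact: (cc_le i j t0).
  + exact: ee_le.
- rewrite [k2 / N%:R]mulrC -[N%:R^-1 * k2 * _]mulrA [k2 * _]mulr_sumr normrM ger0_norm ?invr_ge0; last exact: ltW.
  apply: ler_wpM2l; first by rewrite invr_ge0; exact: ltW.
  apply: sum_abs_le.
    rewrite mulr1; apply: addr_ge0 => //; apply: mulr_ge0 => //.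
  move=> j _; rewrite normrM (ger0_norm Hk2) normrM mulrA.
  apply: ler_pM => //.
  + by apply: mulr_ge0.
  + exact: (kp_le i j t0).
  + exact: ee_le.
Qed.

Lemma Ba_ge0 : 0 <= Ba.
Proof.
have Bv2 : 0 <= Bv + Bv by have := Bv_ge0; lra.
have Np := ltW Npos.
have E0p : 0 <= E0 := E_ge0 0.
have := psiM_ge0.
have Bp := Bv_ge0.
rewrite /Ba => hp; move: Bv2 E0p Bp; generalize Bv E0 => B E Bv2 E0p Bp.
repeat (apply: addr_ge0 || apply: mulr_ge0); rewrite ?invr_ge0 ?mulr1 //.
Qed.

Definition Mv := d%:R * ((Bv + Bv) * (Ba + Ba)) + d%:R * ((Ba + Ba) * (Bv + Bv)).

Lemma D_vij t i j : 0 <= t -> exists l,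
  has_deriv_nonneg (fun s => enorm (vdiff (v i s) (v j s)) ^+ 2) t l /\ `|l| <= Mv.
Proof.
move=> t0.
have Hd : forall k, has_deriv_nonneg (fun s => vdiff (v i s) (v j s) k) t
                      (vdiff (acc t i) (acc t j) k).
  by move=> k; exact (D_sub (Dv t0 i k) (Dv t0 j k)).
have H := D_vdot Hd Hd.
have Bv2 : 0 <= Bv + Bv by have := Bv_ge0; lra.
have Ba2 : 0 <= Ba + Ba by apply: addr_ge0; exact: Ba_ge0.
eexists; split; first by refine (D_ext H _) => s; rewrite enorm_sq.
apply: le_trans (ler_normD _ _) _; apply: lerD; apply: vdot_abs_le => // k.
- by rewrite /vdiff [X in X <= _]distrC; exact: dv_le.
- by apply: le_trans (ler_normB _ _) _; apply: lerD; exact: acc_le.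
- by apply: le_trans (ler_normB _ _) _; apply: lerD; exact: acc_le.
- by rewrite /vdiff [X in X <= _]distrC; exact: dv_le.
Qed.

End Model.

Unset Implicit Arguments. Set Strict Implicit.

Theorem lemma4p1 (R : realType) (N d : nat) (kappa0 kappa1 kappa2 psiM : R)
  (psi : R -> R) (dinf : 'I_N -> 'I_N -> R)
  (x v : 'I_N -> R -> 'I_d -> R) :
  (2 <= N)%N -> (1 <= d)%N ->
  0 <= kappa0 -> 0 <= kappa1 -> 0 <= kappa2 ->
  (forall i j, dinf i j = dinf j i) -> (forall i, dinf i i = 0) ->
  (* psi locally Lipschitz on [0, +oo) *)
  (forall b, 0 <= b -> exists L, forall r s, 0 <= r <= b -> 0 <= s <= b ->
        `|psi r - psi s| <= L * `|r - s|) ->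
  (forall r, 0 <= r -> 0 <= psi r <= psiM) ->
  (* min_{[0,U]} psi > 0 (U = +oo when kappa2 = 0) *)
  (exists c, 0 < c /\ forall r, 0 <= r ->
      (kappa2 = 0 \/
       le_U kappa2
         (cs_energy kappa2 dinf (fun i => x i 0) (fun i => v i 0)) dinf r) ->
      c <= psi r) ->
  cs_global_solution kappa0 kappa1 kappa2 psi dinf x v ->
  forall i j : 'I_N,
    (exists M, forall t, 0 <= t -> exists l,
        has_deriv_nonneg (fun s => enorm (vdiff (v i s) (v j s)) ^+ 2) t l
        /\ `|l| <= M)
    /\
    (forall eps, 0 < eps -> exists delta, 0 < delta /\
        forall s t, 0 <= s -> 0 <= t -> `|s - t| < delta ->
          `|enorm (vdiff (v i s) (v j s)) ^+ 2 - enorm (vdiff (v i t) (v j t)) ^+ 2|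
            < eps).
Proof.
move=> HN Hd Hk0 Hk1 Hk2 Hsym Hdiag Hlip Hpsi Hmin Hsol i j.
have Hb := fun t (t0 : 0 <= t) => D_vij HN Hk0 Hk1 Hk2 Hsym Hpsi Hsol i j t0.
split; first by exists (Mv kappa0 kappa1 kappa2 psiM dinf x v).
move: Hb; set M := Mv _ _ _ _ _ _ _ => Hb.
move=> eps eps0.
have M0 : 0 <= M.
  by have [l [_ hl]] := Hb 0 (lexx 0); exact: le_trans (normr_ge0 l) hl.
have Hl := D_lip Hb.
have M1 : 0 < M + 1 by lra.
exists (eps / (M + 1)); split; first exact: divr_gt0.
move=> s t s0 t0 st.
apply: le_lt_trans (Hl s t s0 t0) _.
have h1 : M * `|s - t| <= M * (eps / (M + 1)) by rewrite ler_wpM2l //; exact: ltW.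
have h2 : M * (eps / (M + 1)) < eps.
  rewrite mulrA ltr_pdivrMr //; lra.
lra.
Qed.
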